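(* Consider the $4$-body problem on the surface $\mathbb{M}^2$ of constant curvature $1$, with four particles on one geodesic (the real axis) with masses $m_1=m_2=1$, $m_3=m_4=m>0$, in a symmetric configuration with initial positions $z_1=-z_2=a>0$ and $z_3=-z_4=r>a$. Then there do not exist relative equilibria.
   Context: $\mathbb{M}^2$ is the complex plane with metric $ds^2=\frac{4\,dz\,d\bar z}{(1+|z|^2)^2}$; the distance satisfies $\cos d(z_k,z_j)=\frac{2(z_k\bar z_j+z_j\bar z_k)+(|z_k|^2-1)(|z_j|^2-1)}{(|z_k|^2+1)(|z_j|^2+1)}$. The curved $n$-body problem has kinetic energy $T=\frac12\sum_i m_i\frac{4|\dot z_i|^2}{(1+|z_i|^2)^2}$ and force function $U=\sum_{i<j}m_im_j\cot d(z_i,z_j)$. A relative equilibrium is a solution invariant under a one-parameter subgroup of isometries; it suffices to consider solutions $w(t)=e^{it}z$. Following earlier work, positions $z_1,\dots,z_n$ ($r_l=|z_l|$) form a relative equilibrium iff for each $i$: $\frac{(1-r_i^2)z_i}{4(1+r_i^2)^4}=-\sum_{j\ne i}\frac{m_j(r_j^2+1)^2(1+z_i\bar z_j)(z_j-z_i)}{T_{ij}^{3/2}}$, with $T_{ij}=(r_i^2+1)^2(r_j^2+1)^2-[2(z_i\bar z_j+z_j\bar z_i)+(r_i^2-1)(r_j^2-1)]^2$. Singular configurations are excluded. *)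

(* Defs.v *)
From HB Require Import structures.
From mathcomp Require Import all_boot all_order all_algebra.
From mathcomp Require Import complex.
Set Implicit Arguments. Unset Strict Implicit. Unset Printing Implicit Defensive.
Import Order.TTheory GRing.Theory Num.Theory.
Local Open Scope ring_scope.
Local Open Scope complex_scope.

Section Curved.
Variable R : rcfType.

Definition sqnorm (z : R[i]) : R := complex.Re z ^+ 2 + complex.Im z ^+ 2.

(* T_ij = (r_i^2+1)^2 (r_j^2+1)^2 - [2(z_i zbar_j + z_j zbar_i) + (r_i^2-1)(r_j^2-1)]^2
   (the bracket is real; we take its real part) *)
Definition Tij (zi zj : R[i]) : R :=
  (sqnorm zi + 1) ^+ 2 * (sqnorm zj + 1) ^+ 2
  - (complex.Re (2%:R * (zi * zj^* + zj * zi^*)) + (sqnorm zi - 1) * (sqnorm zj - 1)) ^+ 2.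

Definition pow32 (t : R) : R := t * Num.sqrt t.

(* A configuration is singular when some T_ij (i <> j) vanishes
   (collision or antipodal particles, i.e. sin d(z_i,z_j) = 0). *)
Definition nonsingular (n : nat) (z : 'I_n -> R[i]) : Prop :=
  forall i j : 'I_n, i != j -> Tij (z i) (z j) != 0.

(* The relative-equilibrium equations of the curved n-body problem on M^2
   (curvature 1), for the solution w(t) = e^{it} z. *)
Definition rel_eq_eqs (n : nat) (m : 'I_n -> R) (z : 'I_n -> R[i]) : Prop :=
  forall i : 'I_n,
    ((1 - sqnorm (z i))%:C * z i) / ((4%:R * (1 + sqnorm (z i)) ^+ 4)%:C)
    = - \sum_(j < n | j != i)
          ((m j * (sqnorm (z j) + 1) ^+ 2)%:C * (1 + z i * (z j)^*) * (z j - z i))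
          / (pow32 (Tij (z i) (z j)))%:C.

Definition relative_equilibrium (n : nat) (m : 'I_n -> R) (z : 'I_n -> R[i]) : Prop :=
  nonsingular z /\ rel_eq_eqs m z.

Definition masses4 (m : R) (i : 'I_4) : R :=
  match val i with 0%N | 1%N => 1 | _ => m end.

Definition config4 (a r : R) (i : 'I_4) : R[i] :=
  match val i with
  | 0%N => a%:C
  | 1%N => (- a)%:C
  | 2%N => r%:C
  | _ => (- r)%:C
  end.

End Curved.

(* Main.v *)
Require Import Defs.
From mathcomp Require Import all_boot all_order all_algebra.
From mathcomp Require Import complex.
From mathcomp Require Import ring lra.
Import Order.TTheory GRing.Theory Num.Theory.
Local Open Scope ring_scope.
Local Open Scope complex_scope.

Section S.
Variable R : rcfType.
Lemma sqnormR (x : R) : sqnorm x%:C = x ^+ 2.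
Proof. rewrite /sqnorm /=. ring. Qed.
Lemma conjR (x : R) : Num.conj (x%:C) = x%:C.
Proof. exact: conjc_real. Qed.
Lemma TijR (x y : R) : Tij x%:C y%:C = 4%:R * ((y - x) * (1 + x * y)) ^+ 2.
Proof.
rewrite /Tij !conjR !sqnormR.
have -> : (2%:R * (x%:C * y%:C + y%:C * x%:C) : R[i]) = (2%:R * (x*y + y*x))%:C.
  by rewrite !(rmorphM (real_complex R)) !(rmorphD (real_complex R)) !(rmorphM (real_complex R)).
rewrite /=. ring.
Qed.
Lemma pow32R (t : R) : pow32 (4%:R * t ^+ 2) = 8%:R * t ^+ 2 * `|t|.
Proof.
rewrite /pow32 (_ : 4%:R * t^+2 = (2%:R * t)^+2); last by ring.
rewrite sqrtr_sqr normrM ger0_norm //. ring.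
Qed.

Lemma invC (p : R) : (p^-1)%:C = (p%:C)^-1.
Proof.
have [->|p0] := eqVneq p 0; first by rewrite !invr0.
have pC : p%:C != 0 by apply/eqP=> /complexI /eqP; rewrite (negbTE p0).
apply: (mulfI pC); rewrite mulfV // -(rmorphM (real_complex R)) mulfV //.
Qed.
Definition tm (x y : R) := (y^+2+1)^+2 * (1 + x*y) * (y - x) / pow32 (Tij x%:C y%:C).
Lemma gen (mj x y p : R) :
  ((mj * (y^+2 + 1) ^+ 2)%:C * (1 + x%:C * y%:C) * (y%:C - x%:C)) / p%:C
  = (mj * ((y^+2+1)^+2 * (1 + x*y) * (y - x) / p))%:C.
Proof.
rewrite !(rmorphM (real_complex R)) /= invC.
rewrite !(rmorphD (real_complex R)) ?(rmorphB (real_complex R)) ?(rmorph1 (real_complex R)) ?(rmorphXn (real_complex R)) ?(rmorphM (real_complex R)) ?(rmorphN (real_complex R)).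
ring.
Qed.
Lemma term_real (mj x y : R) :
  ((mj * (sqnorm y%:C + 1) ^+ 2)%:C * (1 + x%:C * (y%:C)^*) * (y%:C - x%:C)) / (pow32 (Tij x%:C y%:C))%:C
  = (mj * tm x y)%:C.
Proof. by rewrite sqnormR conjR gen. Qed.
Lemma lhs_real (x : R) :
  (1 - sqnorm x%:C)%:C * x%:C / (4 * (1 + sqnorm x%:C) ^+ 4)%:C
  = ((1 - x^+2) * x / (4 * (1 + x^+2)^+4))%:C.
Proof.
rewrite sqnormR !(rmorphM (real_complex R)) /= invC !(rmorphM (real_complex R)) /= ?(rmorphXn (real_complex R)) /=.
by [].
Qed.
Lemma extract0 (A B1 B2 B3 : R) :
  A%:C = -(0 + (B1%:C + (B2%:C + (B3%:C + 0)))) -> A = -(B1+(B2+B3)).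
Proof.
rewrite add0r addr0 => E; apply: complexI; rewrite E.
by rewrite (rmorphN (real_complex R)) !(rmorphD (real_complex R)).
Qed.
Lemma extract2 (A B1 B2 B3 : R) :
  A%:C = -(B1%:C + (B2%:C + (0 + (B3%:C + 0)))) -> A = -(B1+(B2+B3)).
Proof.
rewrite add0r addr0 => E; apply: complexI; rewrite E.
by rewrite (rmorphN (real_complex R)) !(rmorphD (real_complex R)).
Qed.

Definition S (x : R) := x * (1 - x^+2) / (2%:R * (1 + x^+2)^+2).
Definition V (x y : R) := (1 + x^+2)^+2 * (1 + y^+2)^+2 / (4%:R * ((y - x) * (1 + x * y))^+2).

Lemma tm_pos (x y : R) : 0 < (y - x) * (1 + x * y) ->
  tm x y * (2%:R * (1 + x^+2)^+2) = V x y.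
Proof.
move=> hP; rewrite /tm /V TijR pow32R ger0_norm; last exact: ltW.
have h1 : (1 + x^+2) != 0 by apply/lt0r_neq0; nra.
have h2 : (y - x) * (1 + x * y) != 0 by apply/lt0r_neq0.
have [hA hB] : y - x != 0 /\ 1 + x * y != 0 by move: h2; rewrite mulf_eq0 negb_or => /andP.
field; by rewrite hA hB.
Qed.

Lemma tm_neg (x y : R) : (y - x) * (1 + x * y) < 0 ->
  tm x y * (2%:R * (1 + x^+2)^+2) = - V x y.
Proof.
move=> hP; rewrite /tm /V TijR pow32R ltr0_norm //.
have h1 : (1 + x^+2) != 0 by apply/lt0r_neq0; nra.
have h2 : (y - x) * (1 + x * y) != 0 by apply/ltr0_neq0.
have [hA hB] : y - x != 0 /\ 1 + x * y != 0 by move: h2; rewrite mulf_eq0 negb_or => /andP.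
field; by rewrite hA hB.
Qed.

Lemma lhsS (x : R) : (1 - x^+2) * x / (4%:R * (1 + x^+2)^+4) * (2%:R * (1 + x^+2)^+2) = S x.
Proof.
have h1 : (1 + x^+2) != 0 by apply/lt0r_neq0; nra.
rewrite /S; field; rewrite ?h1 ?pnatr_eq0 //.
Qed.

Lemma V_ge1 (x y : R) : (y - x) * (1 + x * y) != 0 -> 1 <= V x y.
Proof.
move=> hP; rewrite /V ler_pdivlMr; last first.
  by apply: mulr_gt0; [lra| rewrite exprn_even_gt0].
have -> : (1 + x^+2)^+2 * (1 + y^+2)^+2 = 4%:R * ((y - x) * (1 + x * y))^+2 + ((y-x)^+2 - (1+x*y)^+2)^+2 by ring.
rewrite mul1r lerDl; exact: sqr_ge0.
Qed.

Lemma S_le (x : R) : S x <= 1/8%:R.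
Proof.
have h : 0 < 2%:R * (1 + x^+2)^+2 by apply: mulr_gt0; [lra| rewrite exprn_gt0 //; nra].
rewrite /S ler_pdivrMr //.
have : 0 <= (1 - x^+2 - 2%:R*x)^+2 by exact: sqr_ge0.
nra.
Qed.

Lemma S_ge (x : R) : - (1/8%:R) <= S x.
Proof.
have h : 0 < 2%:R * (1 + x^+2)^+2 by apply: mulr_gt0; [lra| rewrite exprn_gt0 //; nra].
rewrite /S ler_pdivlMr //.
have : 0 <= (1 - x^+2 + 2%:R*x)^+2 by exact: sqr_ge0.
nra.
Qed.

Lemma VM (x : R) : x != 0 -> 1 - x^+2 != 0 -> V x (-x) * (8%:R * S x)^+2 = 1.
Proof.
move=> h0 h1.
have h2 : (1 + x^+2) != 0 by apply/lt0r_neq0; nra.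
have h3 : 1 + x * - x != 0 by rewrite mulrN -expr2.
have h4 : - x - x != 0 by rewrite -opprD oppr_eq0 -mulr2n mulrn_eq0 negb_or h0.
rewrite /V /S; field.
by rewrite ?h0 ?h1 ?h2 ?h3 ?h4 ?pnatr_eq0 ?mulf_neq0 ?expf_neq0.
Qed.

Lemma Vsym1 (a r : R) : V r a = V a r.
Proof. rewrite /V; congr (_ / _); ring. Qed.
Lemma Vsym2 (a r : R) : V r (-a) = V a (-r).
Proof. rewrite /V; congr (_ / _); ring. Qed.

Lemma Vpq (a r : R) : (r - a) * (1 + a * r) != 0 -> (- r - a) * (1 + a * - r) != 0 ->
  1 + a^+2 != 0 -> 1 + r^+2 != 0 ->
  (V a r)^-1 - (V a (-r))^-1 = (8%:R * S a) * (- (8%:R * S r)).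
Proof.
move=> h1 h2 h3 h4.
have [hA hB] : r - a != 0 /\ 1 + a * r != 0 by move: h1; rewrite mulf_eq0 negb_or => /andP.
have [hC hD] : - r - a != 0 /\ 1 + a * - r != 0 by move: h2; rewrite mulf_eq0 negb_or => /andP.
rewrite /V /S; field.
by rewrite hA hB hC hD h3 h4.
Qed.

Lemma invdiff (K J t : R) : 0 < K -> 0 < J -> K^-1 - J^-1 = t -> J - K = K * J * t.
Proof.
move=> hK hJ <-.
have hK' : K != 0 by apply/lt0r_neq0.
have hJ' : J != 0 by apply/lt0r_neq0.
by field; rewrite hK' hJ'.
Qed.

Lemma nz4 (t : R) : 4%:R * t^+2 != 0 -> t != 0.
Proof. by apply: contra => /eqP ->; rewrite expr0n mulr0. Qed.



Arguments V_ge1 {x y}. Arguments tm_pos {x y}. Arguments tm_neg {x y}. Arguments Vpq {a r}. Arguments invdiff {K J t}. Arguments nz4 {t}.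
Lemma main_aux (a r m : R) :
  0 < a -> a < r -> 0 < m ->
  ~ relative_equilibrium (masses4 m) (config4 a r).
Proof.
move=> ha har hm [NS H].
have P01 := NS ord0 (@Ordinal 4 1 isT) isT.
have P23 := NS (@Ordinal 4 2 isT) (@Ordinal 4 3 isT) isT.
have P03 := NS ord0 (@Ordinal 4 3 isT) isT.
rewrite /config4 /= TijR in P01; rewrite /config4 /= TijR in P23; rewrite /config4 /= TijR in P03.
move/nz4: P01 => P01; move/nz4: P23 => P23; move/nz4: P03 => P03.
have := H ord0. rewrite big_mkcond /= !big_ord_recl big_ord0 /=.
rewrite /config4 /masses4 /= !term_real lhs_real => /extract0 E1.
have := H (@Ordinal 4 2 isT). rewrite big_mkcond /= !big_ord_recl big_ord0 /=.
rewrite /config4 /masses4 /= !term_real lhs_real => /extract2 E3.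
have E1' : S a = - (1 * (tm a (-a) * (2%:R * (1 + a^+2)^+2)) + (m * (tm a r * (2%:R * (1 + a^+2)^+2)) + m * (tm a (-r) * (2%:R * (1 + a^+2)^+2)))).
  by rewrite -lhsS E1; ring.
have E3' : S r = - (1 * (tm r a * (2%:R * (1 + r^+2)^+2)) + (1 * (tm r (-a) * (2%:R * (1 + r^+2)^+2)) + m * (tm r (-r) * (2%:R * (1 + r^+2)^+2)))).
  by rewrite -lhsS E3; ring.
clear E1 E3 H NS.
have P02 : 0 < (r - a) * (1 + a * r) by apply: mulr_gt0; nra.
have K1 := V_ge1 (lt0r_neq0 P02).
rewrite (tm_pos P02) in E1'.
case: (ltrgtP a 1) => [a1|a1|a1]; last first.
- move: P01; rewrite a1 (_ : (-1 - 1) * (1 + 1 * -1) = 0 :> R); [by rewrite eqxx | ring].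
- (* a > 1 *)
  have Q1 : 0 < (- a - a) * (1 + a * - a) by nra.
  have Q3 : 0 < (- r - a) * (1 + a * - r) by nra.
  rewrite (tm_pos Q1) (tm_pos Q3) in E1'.
  have := V_ge1 (lt0r_neq0 Q1); have := V_ge1 (lt0r_neq0 Q3).
  have := S_ge a. nra.
- (* a < 1 *)
  have Q1 : (- a - a) * (1 + a * - a) < 0 by nra.
  rewrite (tm_neg Q1) in E1'.
  have M1 := V_ge1 (ltr0_neq0 Q1).
  case: (ltrgtP r 1) => [r1|r1|r1]; last first.
  + move: P23; rewrite r1 (_ : (-1 - 1) * (1 + 1 * -1) = 0 :> R); [by rewrite eqxx | ring].
  + (* r > 1 *)
    have Sa : 0 < S a by rewrite /S; apply: divr_gt0; [nra | apply: mulr_gt0; [lra | rewrite exprn_gt0 //; nra]].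
    have Sr : 0 < - S r by rewrite /S -mulNr; apply: divr_gt0; [nra | apply: mulr_gt0; [lra | rewrite exprn_gt0 //; nra]].
    have hpq := Vpq (lt0r_neq0 P02) P03 (lt0r_neq0 (ltr_pwDl ltr01 (sqr_ge0 a))) (lt0r_neq0 (ltr_pwDl ltr01 (sqr_ge0 r))).
    have J1 := V_ge1 P03.
    have hJK := invdiff (lt_le_trans ltr01 K1) (lt_le_trans ltr01 J1) hpq.
    case: (ltrgtP (a * r) 1) => [ar1|ar1|ar1]; last first.
    * by move: P03; rewrite mulrN ar1 subrr mulr0 eqxx.
    *
      have Q3 : 0 < (- r - a) * (1 + a * - r) by nra.
      rewrite (tm_pos Q3) in E1'.
      have Q1' : (a - r) * (1 + r * a) < 0 by nra.
      have Q2' : 0 < (- a - r) * (1 + r * - a) by nra.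
      have Q4' : 0 < (- r - r) * (1 + r * - r) by nra.
      rewrite (tm_neg Q1') (tm_pos Q2') (tm_pos Q4') Vsym1 Vsym2 in E3'.
      have N1 := V_ge1 (lt0r_neq0 Q4').
      have hM : V a (-a) * (8%:R * S a)^+2 = 1.
        apply: VM; first by apply/lt0r_neq0.
        by apply/lt0r_neq0; nra.
      move: E1' E3' hJK hM N1 M1 K1 J1 Sa Sr (S_le a) (S_ge r).
      move: (V a r) (V a (-r)) (V a (-a)) (V r (-r)) (S a) (S r) => K J M N sa sr.
      move=> E1 E3 hJK hM N1 M1 K1 J1 Sa Sr sa1 sr1.
      have hX : m * (K + J) = M - sa by lra.
      have hY : m * N = K - J - sr by lra.
      have hKJ : (K + J) / 2%:R <= K * J by nra.
      have pq : 0 < (8%:R * sa) * (- (8%:R * sr)) by apply: mulr_gt0; lra.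
      have h1 : m * N <= - sr - (K + J) / 2%:R * ((8%:R * sa) * (- (8%:R * sr))).
        rewrite hY.
        have : (K + J) / 2%:R * ((8%:R * sa) * (- (8%:R * sr))) <= K * J * ((8%:R * sa) * (- (8%:R * sr))) by apply: ler_wpM2r; lra.
        lra.
      have h2 : (M - sa) * N = (K + J) * (m * N) by rewrite -hX; ring.
      have KJ0 : 0 <= K + J by lra.
      have h3 : (K + J) * (m * N) <= (K + J) * (- sr - (K + J) / 2%:R * ((8%:R * sa) * (- (8%:R * sr)))) by apply: ler_wpM2l.
      have h4 : sa * ((K + J) * (- sr - (K + J) / 2%:R * ((8%:R * sa) * (- (8%:R * sr))))) <= - sr / 128%:R.
        have : 0 <= (- sr) * (sa * (K + J) - 1/64%:R)^+2 by apply: mulr_ge0; [lra | exact: sqr_ge0].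
        rewrite expr2. move=> H0.
        have -> : sa * ((K + J) * (- sr - (K + J) / 2%:R * ((8%:R * sa) * (- (8%:R * sr))))) = - sr / 128%:R - 32%:R * ((- sr) * ((sa * (K + J) - 1/64%:R) * (sa * (K + J) - 1/64%:R))) by field.
        lra.
      have h5 : sa * (M - sa) * N <= 1 / 1024%:R.
        have : sa * ((M - sa) * N) <= sa * ((K + J) * (m * N)) by rewrite h2.
        have : sa * ((K + J) * (m * N)) <= sa * ((K + J) * (- sr - (K + J) / 2%:R * ((8%:R * sa) * (- (8%:R * sr))))) by apply: ler_wpM2l; lra.
        nra.
      have hMs : 0 < M - sa by lra.
      have h6 : sa * (M - sa) <= 1 / 1024%:R.
        have : sa * (M - sa) * 1 <= sa * (M - sa) * N by apply: ler_wpM2l; [apply: mulr_ge0; lra | lra].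
        lra.
      have h7 : sa * sa * M = 1 / 64%:R by rewrite expr2 in hM; nra.
      have h8 : sa * (sa * (M - sa)) <= sa / 1024%:R by nra.
      have h9 : sa * sa <= 1 / 64%:R by nra.
      have h10 : sa * (sa * sa) <= 1 / 512%:R by nra.
      nra.
    *
      have Q3 : (- r - a) * (1 + a * - r) < 0 by nra.
      rewrite (tm_neg Q3) in E1'.
      have := S_le a.
      have : 0 < V a r * V a (- r) * (8%:R * S a * - (8%:R * S r)).
        apply: mulr_gt0; first by apply: mulr_gt0; lra.
        by apply: mulr_gt0; lra.
      nra.
  + (* r < 1 *)
    have Q1' : (a - r) * (1 + r * a) < 0 by nra.
    have Q2' : (- a - r) * (1 + r * - a) < 0 by nra.
    have Q4' : (- r - r) * (1 + r * - r) < 0 by nra.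
    rewrite (tm_neg Q1') (tm_neg Q2') (tm_neg Q4') in E3'.
    have := V_ge1 (ltr0_neq0 Q1'); have := V_ge1 (ltr0_neq0 Q2'); have := V_ge1 (ltr0_neq0 Q4').
    have := S_le r. nra.
Qed.
End S.

Theorem corollary1 (R : rcfType) (a r m : R) :
  0 < a -> a < r -> 0 < m ->
  ~ relative_equilibrium (masses4 m) (config4 a r).
Proof. exact: main_aux. Qed.
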